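(* Let $\alpha>0$ and $\zeta>0$, and define the power series $$\Omega_0^{(4)}(v)=\frac{\Gamma(3/4)}{\Gamma(\zeta/4)}\sum_{l=0}^{\infty}\frac{\Gamma(l/2+\zeta/4)}{l!\,\Gamma(l/2+3/4)}\Big(\frac{-v^2}{2\alpha^{1/2}}\Big)^l,$$ $$\Omega_1^{(4)}(v)=\frac{v\sqrt{\pi/2}}{\Gamma[(\zeta+1)/4]}\sum_{l=0}^{\infty}\frac{\Gamma[(l+1+\zeta)/4]\,s(l)}{\Gamma(l/4+1)\,\Gamma[(l+3)/2]}\Big[\frac{-v}{(4\alpha)^{1/4}}\Big]^l,$$ with $s(l)=2^{-1/2}[\cos(l\pi/4)+\sin(l\pi/4)]\cos(l\pi/4)$. Let $$f_1(v)={}_1F_2\Big(\tfrac{\zeta}{4};\tfrac12,\tfrac34;\tfrac{v^4}{16\alpha}\Big),\quad f_2(v)=v\,{}_1F_2\Big(\tfrac{\zeta+1}{4};\tfrac34,\tfrac54;\tfrac{v^4}{16\alpha}\Big),\quad f_3(v)=v^2\,{}_1F_2\Big(\tfrac{\zeta+2}{4};\tfrac54,\tfrac32;\tfrac{v^4}{16\alpha}\Big).$$ Then $f_1,f_2,f_3$ are three linearly independent solutions of $\big(\alpha\,\tfrac{d^3}{dv^3}-v^2\tfrac{d}{dv}-\zeta v\big)\Omega(v)=0$, and $$\Omega_0^{(4)}=f_1-\frac{2\,\Gamma(3/4)\,\Gamma[(\zeta+2)/4]}{\sqrt{\alpha}\,\Gamma(1/4)\,\Gamma(\zeta/4)}\,f_3,\qquad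 \Omega_1^{(4)}=f_2-\frac{(2\pi)^{1/2}\,\Gamma[(\zeta+2)/4]}{\alpha^{1/4}\,\Gamma(1/4)\,\Gamma[(\zeta+1)/4]}\,f_3 .$$
   Context: ${}_1F_2$ is the generalized hypergeometric function; $\alpha^{1/2},\alpha^{1/4}$ denote positive roots. *)

(* Defs.v *)
From Stdlib Require Import Arith Factorial Reals Lra ClassicalEpsilon.
Open Scope R_scope.

Fixpoint poch (a : R) (k : nat) : R :=
  match k with
  | O => 1
  | S k' => poch a k' * (a + INR k')
  end.

(* Euler Gamma function via Gauss' limit formula
   Gamma(x) = lim_n n! n^x / (x (x+1) ... (x+n)),  valid for x > 0
   (Stdlib has no Gamma function). *)
Definition gamma_seq (x : R) (n : nat) : R :=
  INR (fact n) * Rpower (INR n) x / poch x (S n).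

Definition Gamma (x : R) : R :=
  epsilon (inhabits 0) (fun g => Un_cv (gamma_seq x) g).

Definition F12_term (a b1 b2 z : R) (k : nat) : R :=
  poch a k / (poch b1 k * poch b2 k) * z ^ k / INR (fact k).

Definition F12 (a b1 b2 z : R) : R :=
  epsilon (inhabits 0) (fun s => infinite_sum (F12_term a b1 b2 z) s).

Definition f1 (alpha zeta v : R) : R :=
  F12 (zeta / 4) (1 / 2) (3 / 4) (v ^ 4 / (16 * alpha)).
Definition f2 (alpha zeta v : R) : R :=
  v * F12 ((zeta + 1) / 4) (3 / 4) (5 / 4) (v ^ 4 / (16 * alpha)).
Definition f3 (alpha zeta v : R) : R :=
  v ^ 2 * F12 ((zeta + 2) / 4) (5 / 4) (3 / 2) (v ^ 4 / (16 * alpha)).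

Definition solves_ODE (alpha zeta : R) (f : R -> R) : Prop :=
  exists f1' f2' f3' : R -> R,
    (forall v, derivable_pt_lim f v (f1' v)) /\
    (forall v, derivable_pt_lim f1' v (f2' v)) /\
    (forall v, derivable_pt_lim f2' v (f3' v)) /\
    (forall v, alpha * f3' v - v ^ 2 * f1' v - zeta * v * f v = 0).

Definition lin_indep3 (g1 g2 g3 : R -> R) : Prop :=
  forall c1 c2 c3 : R,
    (forall v, c1 * g1 v + c2 * g2 v + c3 * g3 v = 0) ->
    c1 = 0 /\ c2 = 0 /\ c3 = 0.

Definition s_fun (l : nat) : R :=
  / sqrt 2 * (cos (INR l * PI / 4) + sin (INR l * PI / 4)) * cos (INR l * PI / 4).

Definition Omega0_term (alpha zeta v : R) (l : nat) : R :=
  Gamma (3 / 4) / Gamma (zeta / 4) *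
  (Gamma (INR l / 2 + zeta / 4) / (INR (fact l) * Gamma (INR l / 2 + 3 / 4)) *
   (- v ^ 2 / (2 * sqrt alpha)) ^ l).

Definition Omega1_term (alpha zeta v : R) (l : nat) : R :=
  v * sqrt (PI / 2) / Gamma ((zeta + 1) / 4) *
  (Gamma ((INR l + 1 + zeta) / 4) * s_fun l /
     (Gamma (INR l / 4 + 1) * Gamma ((INR l + 3) / 2)) *
   (- v / Rpower (4 * alpha) (1 / 4)) ^ l).

(* Main.v *)
Require Import Defs.
From Stdlib Require Import Arith Factorial Reals Lra Lia ClassicalEpsilon FunctionalExtensionality.
Open Scope R_scope.

Lemma isum_ext (a b : nat -> R) l : (forall n, a n = b n) -> infinite_sum a l -> infinite_sum b l.
Proof.
  intros H Ha eps He. destruct (Ha eps He) as [N HN]. exists N. intros n Hn.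
  rewrite <- (sum_eq a b n) by (intros; apply H). apply HN; auto.
Qed.

Lemma isum_scal (a : nat -> R) l c : infinite_sum a l -> infinite_sum (fun n => c * a n) (c * l).
Proof.
  intros Ha. unfold infinite_sum. 
  assert (E : forall n, sum_f_R0 (fun n => c * a n) n = c * sum_f_R0 a n).
  { intros n. rewrite scal_sum. apply sum_eq. intros; ring. }
  intros eps He. 
  destruct (Req_dec c 0) as [Hc|Hc].
  - exists 0%nat. intros n _. rewrite E, Hc. unfold Rdist. rewrite !Rmult_0_l, Rminus_0_r, Rabs_R0. lra.
  - assert (He' : eps / Rabs c > 0) by (apply Rdiv_lt_0_compat; [lra| apply Rabs_pos_lt; auto]).
    destruct (Ha _ He') as [N HN]. exists N. intros n Hn. rewrite E. unfold Rdist.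
    rewrite <- Rmult_minus_distr_l, Rabs_mult.
    specialize (HN n Hn). unfold Rdist in HN.
    apply Rmult_lt_compat_l with (r := Rabs c) in HN; [|apply Rabs_pos_lt; auto].
    replace (Rabs c * (eps / Rabs c)) with eps in HN; [lra|]. field. apply Rabs_no_R0; auto.
Qed.

Lemma isum_plus (a b : nat -> R) la lb : infinite_sum a la -> infinite_sum b lb ->
  infinite_sum (fun n => a n + b n) (la + lb).
Proof.
  intros Ha Hb. unfold infinite_sum.
  intros eps He. 
  apply (CV_plus _ _ la lb Ha Hb) in He. destruct He as [N HN]. exists N. intros n Hn.
  rewrite sum_plus. apply HN; auto.
Qed.

Lemma isum_0 : infinite_sum (fun _ => 0) 0.
Proof.
  intros eps He. exists 0%nat. intros n _. unfold Rdist.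
  replace (sum_f_R0 (fun _ => 0) n) with 0. rewrite Rminus_0_r, Rabs_R0; lra.
  induction n; simpl; auto. rewrite <- IHn; ring.
Qed.

Lemma sum_interleave_odd (t u w : nat -> R) :
  (forall k, t (2*k)%nat = u k) -> (forall k, t (2*k+1)%nat = w k) ->
  forall m, sum_f_R0 t (2*m+1) = sum_f_R0 u m + sum_f_R0 w m.
Proof.
  intros Hu Hw. induction m.
  - simpl. rewrite <- (Hu 0%nat), <- (Hw 0%nat). simpl. ring.
  - replace (2 * S m + 1)%nat with (S (S (2*m+1))) by lia. rewrite !tech5.
    rewrite IHm. replace (S (2*m+1)) with (2 * S m)%nat by lia.
    replace (S (2 * S m)) with (2 * S m + 1)%nat by lia. rewrite Hu, Hw. simpl. ring.
Qed.

Lemma isum_interleave (t u w : nat -> R) A B :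
  (forall k, t (2*k)%nat = u k) -> (forall k, t (2*k+1)%nat = w k) ->
  infinite_sum u A -> infinite_sum w B -> infinite_sum t (A + B).
Proof.
  intros Hu Hw HA HB eps He.
  destruct (HA (eps/2) ltac:(lra)) as [N1 H1].
  destruct (HB (eps/2) ltac:(lra)) as [N2 H2].
  exists (2 * (N1 + N2) + 2)%nat. intros n Hn.
  destruct (Nat.Even_or_Odd n) as [[m ->]|[m ->]].
  - destruct m as [|m]; [lia|].
    replace (2 * S m)%nat with (S (2*m+1)) by lia. rewrite tech5.
    rewrite (sum_interleave_odd t u w Hu Hw).
    replace (S (2*m+1)) with (2 * S m)%nat by lia. rewrite Hu.
    specialize (H1 (S m) ltac:(lia)). specialize (H2 m ltac:(lia)). unfold Rdist in *.
    replace (sum_f_R0 u m + sum_f_R0 w m + u (S m) - (A + B)) with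
      ((sum_f_R0 u (S m) - A) + (sum_f_R0 w m - B)) by (rewrite tech5; ring).
    eapply Rle_lt_trans; [apply Rabs_triang|]. lra.
  - rewrite (sum_interleave_odd t u w Hu Hw).
    specialize (H1 m ltac:(lia)). specialize (H2 m ltac:(lia)). unfold Rdist in *.
    replace (sum_f_R0 u m + sum_f_R0 w m - (A + B)) with
      ((sum_f_R0 u m - A) + (sum_f_R0 w m - B)) by ring.
    eapply Rle_lt_trans; [apply Rabs_triang|]. lra.
Qed.

Lemma abs_conv (a : nat -> R) : (exists l, Un_cv (fun N => sum_f_R0 (fun n => Rabs (a n)) N) l) ->
  exists l, infinite_sum a l.
Proof.
  intros [l Hl]. 
  destruct (cv_cauchy_2 a (cauchy_abs a (cv_cauchy_1 _ (exist _ l Hl)))) as [s Hs]. exists s. exact Hs.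
Qed.

Definition entire (a : nat -> R) : Prop :=
  forall r, 0 <= r -> exists l, Un_cv (fun N => sum_f_R0 (fun n => Rabs (a n) * r ^ n) N) l.

Definition PS (a : nat -> R) (x : R) : R :=
  epsilon (inhabits 0) (fun l => infinite_sum (fun n => a n * x ^ n) l).

Definition dcoef (a : nat -> R) (n : nat) : R := INR (S n) * a (S n).

Lemma PS_sum a x : entire a -> infinite_sum (fun n => a n * x ^ n) (PS a x).
Proof.
  intros Ha. unfold PS. apply epsilon_spec.
  apply abs_conv. destruct (Ha (Rabs x) (Rabs_pos x)) as [l Hl]. exists l.
  intros eps He. destruct (Hl eps He) as [N HN]. exists N. intros n Hn.
  rewrite <- (sum_eq (fun n => Rabs (a n) * Rabs x ^ n)). apply HN; auto.
  intros. rewrite Rabs_mult, RPow_abs. auto.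
Qed.

Lemma PS_unique a x l : entire a -> infinite_sum (fun n => a n * x ^ n) l -> PS a x = l.
Proof. intros Ha H. eapply uniqueness_sum; [apply PS_sum; auto| exact H]. Qed.

Lemma cv_shift (b : nat -> R) l : Un_cv (fun N => sum_f_R0 b N) l ->
  Un_cv (fun N => sum_f_R0 (fun n => b (S n)) N) (l - b 0%nat).
Proof.
  intros H eps He. destruct (H eps He) as [N HN]. exists N. intros n Hn.
  specialize (HN (S n) ltac:(lia)). rewrite (decomp_sum b (S n) ltac:(lia)) in HN.
  simpl pred in HN. unfold Rdist in *. replace (sum_f_R0 (fun n => b (S n)) n - (l - b 0%nat))
  with (b 0%nat + sum_f_R0 (fun i : nat => b (S i)) n - l) by ring. exact HN.
Qed.

Lemma INR_S_le_pow2 n : INR (S n) <= 2 ^ n.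
Proof.
  induction n. simpl; lra. rewrite (S_INR (S n)). change (2 ^ S n) with (2 * 2 ^ n).
  assert (1 <= 2 ^ n) by (apply pow_R1_Rle; lra). lra.
Qed.

Lemma entire_d a : entire a -> entire (dcoef a).
Proof.
  intros Ha r Hr.
  set (R0 := 2 * (r + 1)).
  destruct (Ha R0 ltac:(unfold R0; lra)) as [l Hl].
  apply cv_shift in Hl.
  destruct (Rseries_CV_comp (fun n => Rabs (dcoef a n) * r ^ n)
     (fun n => Rabs (a (S n)) * R0 ^ (S n))) as [l' Hl'].
  - intros n. split. apply Rmult_le_pos; [apply Rabs_pos| apply pow_le; lra].
    unfold dcoef. rewrite Rabs_mult, (Rabs_pos_eq (INR (S n))) by apply pos_INR.
    replace (INR (S n) * Rabs (a (S n)) * r ^ n) with (Rabs (a (S n)) * (INR (S n) * r ^ n)) by ring.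
    apply Rmult_le_compat_l; [apply Rabs_pos|].
    apply Rle_trans with (2 ^ n * (r + 1) ^ n).
    + apply Rmult_le_compat. apply pos_INR. apply pow_le; lra. apply INR_S_le_pow2.
      apply pow_incr; lra.
    + unfold R0. rewrite <- Rpow_mult_distr. simpl.
      assert (0 <= (2 * (r+1)) ^ n) by (apply pow_le; lra).
      nra.
  - exists (l - Rabs (a 0%nat) * R0 ^ 0). exact Hl.
  - exists l'. exact Hl'.
Qed.

Lemma deriv_partial a n y :
  derivable_pt_lim (fun y => sum_f_R0 (fun k => a k * y ^ k) (S n)) y
    (sum_f_R0 (fun k => dcoef a k * y ^ k) n).
Proof.
  induction n.
  - simpl. unfold dcoef. simpl.
    assert (H := derivable_pt_lim_plus (fct_cte (a 0%nat * 1)) (mult_real_fct (a 1%nat) id) y _ _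
      (derivable_pt_lim_const _ y) (derivable_pt_lim_scal _ (a 1%nat) y _ (derivable_pt_lim_id y))).
    unfold plus_fct, fct_cte, mult_real_fct, id in H.
    replace (1 * a 1%nat * 1) with (0 + a 1%nat * 1) by ring.
    replace (fun y : R => a 0%nat * 1 + a 1%nat * (y * 1)) with (fun x : R => a 0%nat * 1 + a 1%nat * x).
    exact H. apply functional_extensionality; intros; ring.
  - assert (H := derivable_pt_lim_plus _ (mult_real_fct (a (S (S n))) (fun y => y ^ (S (S n)))) y _ _
      IHn (derivable_pt_lim_scal _ (a (S (S n))) y _ (derivable_pt_lim_pow y (S (S n))))).
    unfold plus_fct, mult_real_fct in H.
    change (sum_f_R0 (fun k : nat => dcoef a k * y ^ k) (S n)) with
      (sum_f_R0 (fun k : nat => dcoef a k * y ^ k) n + dcoef a (S n) * y ^ (S n)).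
    replace (dcoef a (S n) * y ^ S n) with (a (S (S n)) * (INR (S (S n)) * y ^ Init.Nat.pred (S (S n)))).
    exact H. unfold dcoef. simpl pred. ring.
Qed.

Lemma PS_deriv a x : entire a -> derivable_pt_lim (PS a) x (PS (dcoef a) x).
Proof.
  intros Ha.
  assert (Hd := entire_d a Ha).
  set (r := mkposreal (Rabs x + 1) ltac:(pose proof (Rabs_pos x); lra)).
  set (fn := fun k y => dcoef a k * y ^ k).
  pose (cv := fun y => exist (fun l => Un_cv (fun N => SP fn N y) l) (PS (dcoef a) y) (PS_sum _ y Hd)).
  assert (CN : CVN_r fn r).
  { exists (fun n => Rabs (dcoef a n) * r ^ n).
    destruct (constructive_indefinite_description _ (Hd r ltac:(simpl; pose proof (Rabs_pos x); lra))) as [l Hl].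
    exists l. split.
    - intros eps He. destruct (Hl eps He) as [N HN]. exists N. intros n Hn.
      rewrite (sum_eq _ (fun n => Rabs (dcoef a n) * r ^ n)). apply HN; auto.
      intros. rewrite Rabs_pos_eq. auto. apply Rmult_le_pos. apply Rabs_pos. apply pow_le.
      simpl; pose proof (Rabs_pos x); lra.
    - intros n y Hy. unfold fn. rewrite Rabs_mult, <- RPow_abs.
      apply Rmult_le_compat_l. apply Rabs_pos. apply pow_incr. split. apply Rabs_pos.
      unfold Boule in Hy. rewrite Rminus_0_r in Hy. lra. }
  assert (CU := CVN_CVU fn cv r CN).
  change (PS (dcoef a) x) with (SFL fn cv x).
  apply (CVU_derivable (fun n y => sum_f_R0 (fun k => a k * y ^ k) (S n)) (fun n => SP fn n)
     (PS a) (SFL fn cv) 0 r CU).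
  - intros y _. 
    assert (H := PS_sum a y Ha). intros eps He. destruct (H eps He) as [N HN]. exists N.
    intros n Hn. apply HN. lia.
  - intros n y _. unfold SP, fn. apply deriv_partial.
  - unfold Boule. rewrite Rminus_0_r. simpl. lra.
Qed.

Definition sh1 (b : nat -> R) (n : nat) : R := match n with O => 0 | S m => b m end.

Lemma isum_sh1 b x Sm : infinite_sum (fun n => b n * x ^ n) Sm ->
  infinite_sum (fun n => sh1 b n * x ^ n) (x * Sm).
Proof.
  intros H. apply isum_scal with (c := x) in H.
  intros eps He. destruct (H eps He) as [N HN]. exists (S N). intros n Hn.
  destruct n as [|n]; [lia|].
  rewrite (decomp_sum _ (S n) ltac:(lia)). simpl pred. simpl sh1.
  rewrite (sum_eq _ (fun i => x * (b i * x ^ i))). rewrite Rmult_0_l, Rplus_0_l. apply HN; lia.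
  intros; simpl; ring.
Qed.

Lemma ode_PS alpha zeta a : entire a -> a 3%nat = 0 ->
  (forall p, alpha * INR (p+2) * INR (p+3) * INR (p+4) * a (p+4)%nat = (INR p + zeta) * a p) ->
  solves_ODE alpha zeta (PS a).
Proof.
  intros Ha H3 Hrec.
  assert (H1 := entire_d _ Ha). assert (H2 := entire_d _ H1). assert (H3' := entire_d _ H2).
  exists (PS (dcoef a)), (PS (dcoef (dcoef a))), (PS (dcoef (dcoef (dcoef a)))).
  split; [|split; [|split]].
  - intros v; apply PS_deriv; auto.
  - intros v; apply PS_deriv; auto.
  - intros v; apply PS_deriv; auto.
  - intros v.
    assert (S3 := isum_scal _ _ alpha (PS_sum _ v H3')).
    assert (S1 := isum_scal _ _ (-1) (isum_sh1 _ _ _ (isum_sh1 _ _ _ (PS_sum _ v H1)))).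
    assert (S0 := isum_scal _ _ (-zeta) (isum_sh1 _ _ _ (PS_sum _ v Ha))).
    assert (T := isum_plus _ _ _ _ (isum_plus _ _ _ _ S3 S1) S0).
    assert (Z : infinite_sum (fun _ => 0) 0) by apply isum_0.
    assert (E : forall n, (fun n => alpha * (dcoef (dcoef (dcoef a)) n * v ^ n) +
       -1 * (sh1 (sh1 (dcoef a)) n * v ^ n) + - zeta * (sh1 a n * v ^ n)) n = 0).
    { intros n. cbv beta.
      destruct n as [|[|m]].
      - unfold dcoef; simpl sh1. rewrite H3. ring.
      - unfold dcoef; simpl sh1. specialize (Hrec 0%nat). simpl in Hrec |- *.
        transitivity (v * (alpha * (1+1)*(1+1+1)*(1+1+1+1)*a 4%nat - (0+zeta)*a 0%nat)). ring. rewrite Hrec; ring.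
      - change (sh1 (sh1 (dcoef a)) (S (S m))) with (dcoef a m).
        change (sh1 a (S (S m))) with (a (S m)). unfold dcoef.
        specialize (Hrec (S m)).
        replace (S m + 2)%nat with (S (S (S m))) in Hrec by lia.
        replace (S m + 3)%nat with (S (S (S (S m)))) in Hrec by lia.
        replace (S m + 4)%nat with (S (S (S (S (S m))))) in Hrec by lia.
        transitivity (v ^ S (S m) * (alpha * INR (S (S (S m))) * INR (S (S (S (S m)))) * INR (S (S (S (S (S m))))) * a (S (S (S (S (S m))))) - (INR (S m) + zeta) * a (S m))).
        rewrite (S_INR m). simpl pow. ring. rewrite Hrec; ring. }
    apply (isum_ext _ (fun _ => 0)) in T; [|exact E].
    assert (U := uniqueness_sum _ _ _ T Z). lra.
Qed.

Lemma isum_int4 (t : nat -> R) (u : nat -> nat -> R) (A : nat -> R) :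
  (forall k i, (i < 4)%nat -> t (4*k+i)%nat = u i k) ->
  (forall i, (i < 4)%nat -> infinite_sum (u i) (A i)) ->
  infinite_sum t ((A 0%nat + A 2%nat) + (A 1%nat + A 3%nat)).
Proof.
  intros Ht HA.
  apply (isum_interleave t (fun m => t (2*m)%nat) (fun m => t (2*m+1)%nat)); [reflexivity|reflexivity| |].
  - apply (isum_interleave _ (u 0%nat) (u 2%nat)).
    + intros k. rewrite <- Ht by lia. f_equal; lia.
    + intros k. rewrite <- Ht by lia. f_equal; lia.
    + apply HA; lia.
    + apply HA; lia.
  - apply (isum_interleave _ (u 1%nat) (u 3%nat)).
    + intros k. rewrite <- Ht by lia. f_equal; lia.
    + intros k. rewrite <- Ht by lia. f_equal; lia.
    + apply HA; lia.
    + apply HA; lia.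
Qed.

Definition spread (j : nat) (c : nat -> R) (n : nat) : R :=
  if Nat.eqb (n mod 4) j then c (n / 4)%nat else 0.

Lemma spread_eq j c k i : (i < 4)%nat -> spread j c (4*k+i) = if Nat.eqb i j then c k else 0.
Proof.
  intros Hi. unfold spread.
  rewrite <- (Nat.mod_unique (4*k+i) 4 k i Hi eq_refl).
  rewrite <- (Nat.div_unique (4*k+i) 4 k i Hi eq_refl). auto.
Qed.

Lemma isum_spread j c x A : (j < 4)%nat ->
  infinite_sum (fun k => c k * x ^ (4*k+j)) A ->
  infinite_sum (fun n => spread j c n * x ^ n) A.
Proof.
  intros Hj H.
  assert (HA := isum_int4 (fun n => spread j c n * x ^ n)
     (fun i k => if Nat.eqb i j then c k * x ^ (4*k+j) else 0)
     (fun i => if Nat.eqb i j then A else 0)).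
  replace A with (((if Nat.eqb 0 j then A else 0) + (if Nat.eqb 2 j then A else 0)) +
     ((if Nat.eqb 1 j then A else 0) + (if Nat.eqb 3 j then A else 0))).
  apply HA.
  - intros k i Hi. rewrite spread_eq by auto. destruct (Nat.eqb_spec i j); [subst; auto|ring].
  - intros i Hi. destruct (Nat.eqb i j); auto. apply isum_0.
  - destruct j as [|[|[|[|j]]]]; simpl; try ring. lia.
Qed.

Lemma spread_entire j c : (j < 4)%nat ->
  (forall r, 0 <= r -> exists l, infinite_sum (fun k => Rabs (c k) * r ^ k) l) ->
  entire (spread j c).
Proof.
  intros Hj Hc r Hr. destruct (Hc (r^4) (pow_le _ _ Hr)) as [l Hl].
  exists (r ^ j * l). 
  change (infinite_sum (fun n => Rabs (spread j c n) * r ^ n) (r ^ j * l)).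
  assert (E : forall n, Rabs (spread j c n) * r ^ n = spread j (fun k => Rabs (c k)) n * r ^ n).
  { intros n. unfold spread. destruct (Nat.eqb (n mod 4) j); auto. rewrite Rabs_R0; auto. }
  apply (isum_ext (fun n => spread j (fun k => Rabs (c k)) n * r ^ n)); [intros; symmetry; auto|].
  apply isum_spread; auto.
  apply (isum_ext (fun k => r ^ j * (Rabs (c k) * (r ^ 4) ^ k))).
  - intros k. rewrite pow_add, pow_mult. ring.
  - apply isum_scal. auto.
Qed.

Definition cF (a b1 b2 : R) (k : nat) : R := poch a k / (poch b1 k * poch b2 k) / INR (fact k).

Lemma poch_pos b k : 0 < b -> 0 < poch b k.
Proof. intros Hb. induction k; simpl. lra. apply Rmult_lt_0_compat; auto. pose proof (pos_INR k); lra. Qed.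

Lemma poch_S b k : poch b (S k) = poch b k * (b + INR k).
Proof. reflexivity. Qed.

Lemma fact_pos k : 0 < INR (fact k).
Proof. apply lt_0_INR. apply lt_O_fact. Qed.

Lemma cF_pos a b1 b2 k : 0 < a -> 0 < b1 -> 0 < b2 -> 0 < cF a b1 b2 k.
Proof.
  intros. unfold cF. apply Rdiv_lt_0_compat; [|apply fact_pos].
  apply Rdiv_lt_0_compat; [apply poch_pos; auto|]. apply Rmult_lt_0_compat; apply poch_pos; auto.
Qed.

Lemma poch_bound a b1 b2 k : 0 < a -> 0 < b1 -> 0 < b2 ->
  poch a k <= ((a / b2 + 1) / b1) ^ k * (poch b1 k * poch b2 k).
Proof.
  intros Ha Hb1 Hb2. set (M := (a / b2 + 1) / b1).
  assert (HM : 0 < M) by (unfold M; apply Rdiv_lt_0_compat; [|lra]; 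
     assert (0 < a / b2) by (apply Rdiv_lt_0_compat; lra); lra).
  induction k.
  - simpl. lra.
  - rewrite !poch_S. simpl pow.
    assert (Hk := pos_INR k).
    assert (Hs : a + INR k <= M * ((b1 + INR k) * (b2 + INR k))).
    { unfold M. 
      assert (E1 : (a / b2 + 1) / b1 * ((b1 + INR k) * (b2 + INR k)) =
        (a / b2 + 1) * (b2 + INR k) + (a / b2 + 1) * (b2 + INR k) * INR k / b1) by (field; lra).
      rewrite E1.
      assert (E2 : (a / b2 + 1) * (b2 + INR k) = a + INR k + a / b2 * INR k + b2) by (field; lra).
      rewrite E2.
      assert (0 <= a / b2 * INR k) by (apply Rmult_le_pos; [apply Rlt_le, Rdiv_lt_0_compat|]; lra).
      assert (0 <= (a + INR k + a / b2 * INR k + b2) * INR k / b1).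
      { apply Rmult_le_pos; [apply Rmult_le_pos|]; try lra. apply Rlt_le, Rinv_0_lt_compat; lra. }
      lra. }
    assert (P1 := poch_pos b1 k Hb1). assert (P2 := poch_pos b2 k Hb2). assert (P3 := poch_pos a k Ha).
    assert (0 <= M ^ k) by (apply pow_le; lra).
    apply Rle_trans with (M ^ k * (poch b1 k * poch b2 k) * (a + INR k)).
    + apply Rmult_le_compat_r; [lra|auto].
    + apply Rle_trans with (M ^ k * (poch b1 k * poch b2 k) * (M * ((b1 + INR k) * (b2 + INR k)))).
      apply Rmult_le_compat_l; [|auto]. apply Rmult_le_pos; [lra|]. apply Rmult_le_pos; lra.
      right; ring.
Qed.

Lemma cF_summable a b1 b2 r : 0 < a -> 0 < b1 -> 0 < b2 -> 0 <= r ->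
  exists l, infinite_sum (fun k => Rabs (cF a b1 b2 k) * r ^ k) l.
Proof.
  intros Ha Hb1 Hb2 Hr. set (M := (a / b2 + 1) / b1).
  assert (HM : 0 < M) by (unfold M; apply Rdiv_lt_0_compat; [|lra]; 
     assert (0 < a / b2) by (apply Rdiv_lt_0_compat; lra); lra).
  destruct (exist_exp (M * r)) as [e He].
  destruct (Rseries_CV_comp (fun k => Rabs (cF a b1 b2 k) * r ^ k) (fun i => / INR (fact i) * (M * r) ^ i))
    as [l Hl].
  - intros k. assert (Hc := cF_pos a b1 b2 k Ha Hb1 Hb2). rewrite Rabs_pos_eq by lra.
    split. apply Rmult_le_pos; [lra| apply pow_le; auto].
    rewrite Rpow_mult_distr. unfold cF.
    assert (F := fact_pos k). assert (P1 := poch_pos b1 k Hb1). assert (P2 := poch_pos b2 k Hb2).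
    assert (0 <= r ^ k) by (apply pow_le; auto).
    assert (B := poch_bound a b1 b2 k Ha Hb1 Hb2). fold M in B.
    replace (poch a k / (poch b1 k * poch b2 k) / INR (fact k) * r ^ k) with
      (/ INR (fact k) * r ^ k * (poch a k / (poch b1 k * poch b2 k))) by (field; lra).
    replace (/ INR (fact k) * (M ^ k * r ^ k)) with (/ INR (fact k) * r ^ k * M ^ k) by ring.
    apply Rmult_le_compat_l. apply Rmult_le_pos; [apply Rlt_le, Rinv_0_lt_compat; lra| lra].
    apply Rmult_le_reg_r with (poch b1 k * poch b2 k). apply Rmult_lt_0_compat; lra.
    unfold Rdiv. rewrite Rmult_assoc, Rinv_l by (apply Rgt_not_eq; apply Rmult_lt_0_compat; lra). lra.
  - exists e. exact He.
  - exists l. exact Hl.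
Qed.

Lemma F12_term_eq a b1 b2 z k : F12_term a b1 b2 z k = cF a b1 b2 k * z ^ k.
Proof. unfold F12_term, cF. unfold Rdiv. ring. Qed.

Lemma F12_sum a b1 b2 z : 0 < a -> 0 < b1 -> 0 < b2 ->
  infinite_sum (F12_term a b1 b2 z) (F12 a b1 b2 z).
Proof.
  intros Ha Hb1 Hb2. unfold F12. apply epsilon_spec.
  destruct (cF_summable a b1 b2 (Rabs z) Ha Hb1 Hb2 (Rabs_pos z)) as [l Hl].
  apply abs_conv. exists l. intros eps He. destruct (Hl eps He) as [N HN]. exists N. intros n Hn.
  rewrite (sum_eq _ (fun k => Rabs (cF a b1 b2 k) * Rabs z ^ k)). apply HN; auto.
  intros i _. rewrite F12_term_eq, Rabs_mult, RPow_abs. auto.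
Qed.

Lemma F12_ge1 a b1 b2 z : 0 < a -> 0 < b1 -> 0 < b2 -> 0 <= z -> 1 <= F12 a b1 b2 z.
Proof.
  intros Ha Hb1 Hb2 Hz.
  assert (H := sum_incr (F12_term a b1 b2 z) 0 _ (F12_sum a b1 b2 z Ha Hb1 Hb2)).
  simpl in H. rewrite F12_term_eq in H. unfold cF in H. simpl in H.
  replace (1 / (1 * 1) / 1 * 1) with 1 in H by field. apply H.
  intros n. rewrite F12_term_eq. apply Rmult_le_pos. apply Rlt_le, cF_pos; auto. apply pow_le; auto.
Qed.

Lemma spread_rec j c alpha zeta : (j < 4)%nat ->
  (forall k, alpha * INR (4*k+j+2) * INR (4*k+j+3) * INR (4*k+j+4) * c (S k) = (INR (4*k+j) + zeta) * c k) ->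
  forall p, alpha * INR (p+2) * INR (p+3) * INR (p+4) * spread j c (p+4)%nat = (INR p + zeta) * spread j c p.
Proof.
  intros Hj Hc p.
  assert (Hp := Nat.div_mod p 4 ltac:(lia)). assert (Hi := Nat.mod_upper_bound p 4 ltac:(lia)).
  revert Hp Hi. generalize (p / 4)%nat (p mod 4)%nat. intros k i Hp Hi. subst p.
  replace (4 * k + i + 4)%nat with (4 * S k + i)%nat by lia.
  rewrite !spread_eq by auto.
  destruct (Nat.eqb_spec i j).
  - subst i. rewrite <- Hc. replace (4 * S k + j)%nat with (4 * k + j + 4)%nat by lia. ring.
  - ring.
Qed.

Lemma cF_S a b1 b2 k : 0 < b1 -> 0 < b2 ->
  cF a b1 b2 (S k) = cF a b1 b2 k * (a + INR k) / ((b1 + INR k) * (b2 + INR k) * INR (S k)).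
Proof.
  intros Hb1 Hb2. unfold cF. rewrite !poch_S.
  change (fact (S k)) with (S k * fact k)%nat. rewrite mult_INR.
  assert (F := fact_pos k). assert (P1 := poch_pos b1 k Hb1). assert (P2 := poch_pos b2 k Hb2).
  assert (0 < INR (S k)) by (apply lt_0_INR; lia). assert (H1 := pos_INR k).
  field. repeat split; lra.
Qed.

Definition cc (alpha a b1 b2 : R) (k : nat) : R := cF a b1 b2 k * (/ (16 * alpha)) ^ k.

Lemma cc_summable alpha a b1 b2 r : 0 < alpha -> 0 < a -> 0 < b1 -> 0 < b2 -> 0 <= r ->
  exists l, infinite_sum (fun k => Rabs (cc alpha a b1 b2 k) * r ^ k) l.
Proof.
  intros Hal Ha Hb1 Hb2 Hr.
  assert (Hq : 0 < / (16 * alpha)) by (apply Rinv_0_lt_compat; lra).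
  destruct (cF_summable a b1 b2 (/ (16 * alpha) * r) Ha Hb1 Hb2) as [l Hl].
  apply Rmult_le_pos; lra.
  exists l. revert Hl. apply isum_ext. intros k. unfold cc. rewrite Rabs_mult, <- RPow_abs, (Rabs_pos_eq (/ (16 * alpha))) by lra.
  rewrite Rpow_mult_distr. ring.
Qed.

Lemma cc_rec alpha zeta a b1 b2 j : 0 < alpha -> 0 < b1 -> 0 < b2 ->
  (forall x : R, (4 * x + INR j + 2) * (4 * x + INR j + 3) * (4 * x + INR j + 4) =
      64 * ((b1 + x) * (b2 + x) * (x + 1))) ->
  (forall x : R, 4 * (a + x) = 4 * x + INR j + zeta) ->
  forall k, alpha * INR (4*k+j+2) * INR (4*k+j+3) * INR (4*k+j+4) * cc alpha a b1 b2 (S k)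
     = (INR (4*k+j) + zeta) * cc alpha a b1 b2 k.
Proof.
  intros Hal Hb1 Hb2 E1 E2 k. unfold cc. rewrite cF_S by auto.
  replace (INR (4*k+j) + zeta) with (4 * (a + INR k)) by (rewrite E2, plus_INR, mult_INR; simpl; ring).
  rewrite !plus_INR, !mult_INR.
  replace (INR 4) with 4 by (simpl; ring). replace (INR 2) with 2 by (simpl; ring).
  replace (INR 3) with 3 by (simpl; ring).
  assert (H1 := pos_INR k).
  transitivity (alpha * ((4 * INR k + INR j + 2) * (4 * INR k + INR j + 3) * (4 * INR k + INR j + 4)) *
     (cF a b1 b2 k * (a + INR k) / ((b1 + INR k) * (b2 + INR k) * INR (S k))) *
     (/ (16 * alpha)) ^ S k).
  ring.
  rewrite E1. rewrite S_INR. simpl pow. field. repeat split; lra.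
Qed.

Lemma f_isum alpha a b1 b2 j v : 0 < alpha -> 0 < a -> 0 < b1 -> 0 < b2 ->
  infinite_sum (fun k => cc alpha a b1 b2 k * v ^ (4*k+j)) (v ^ j * F12 a b1 b2 (v ^ 4 / (16 * alpha))).
Proof.
  intros Hal Ha Hb1 Hb2.
  apply (isum_ext (fun k => v ^ j * F12_term a b1 b2 (v ^ 4 / (16 * alpha)) k)).
  - intros k. rewrite F12_term_eq. unfold cc. rewrite pow_add, pow_mult.
    unfold Rdiv. rewrite Rpow_mult_distr. ring.
  - apply isum_scal. apply F12_sum; auto.
Qed.

Lemma f_PS alpha a b1 b2 j : (j < 4)%nat -> 0 < alpha -> 0 < a -> 0 < b1 -> 0 < b2 ->
  entire (spread j (cc alpha a b1 b2)) /\
  (fun v => v ^ j * F12 a b1 b2 (v ^ 4 / (16 * alpha))) = PS (spread j (cc alpha a b1 b2)).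
Proof.
  intros Hj Hal Ha Hb1 Hb2.
  assert (En : entire (spread j (cc alpha a b1 b2))).
  { apply spread_entire; auto. intros r Hr. apply cc_summable; auto. }
  split; auto.
  apply functional_extensionality. intros v. symmetry. apply PS_unique; auto.
  apply isum_spread; auto. apply f_isum; auto.
Qed.

Lemma spread_3 j c : (j < 3)%nat -> spread j c 3 = 0.
Proof.
  intros Hj. replace 3%nat with (4*0+3)%nat by lia. rewrite spread_eq by lia.
  destruct (Nat.eqb_spec 3 j); [lia|auto].
Qed.

Lemma solves_f alpha zeta a b1 b2 j : (j < 3)%nat -> 0 < alpha -> 0 < a -> 0 < b1 -> 0 < b2 ->
  (forall x : R, (4 * x + INR j + 2) * (4 * x + INR j + 3) * (4 * x + INR j + 4) =
      64 * ((b1 + x) * (b2 + x) * (x + 1))) ->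
  (forall x : R, 4 * (a + x) = 4 * x + INR j + zeta) ->
  solves_ODE alpha zeta (fun v => v ^ j * F12 a b1 b2 (v ^ 4 / (16 * alpha))).
Proof.
  intros Hj Hal Ha Hb1 Hb2 E1 E2.
  destruct (f_PS alpha a b1 b2 j ltac:(lia) Hal Ha Hb1 Hb2) as [En Eq]. rewrite Eq.
  apply ode_PS; auto. apply spread_3; auto.
  apply spread_rec. lia. apply cc_rec; auto.
Qed.

Lemma solves_ext alpha zeta f g : (forall v, f v = g v) -> solves_ODE alpha zeta g -> solves_ODE alpha zeta f.
Proof.
  intros H. replace f with g; auto. apply functional_extensionality; intros; auto.
Qed.

Lemma part_ODE alpha zeta : 0 < alpha -> 0 < zeta ->
  solves_ODE alpha zeta (f1 alpha zeta) /\
  solves_ODE alpha zeta (f2 alpha zeta) /\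
  solves_ODE alpha zeta (f3 alpha zeta).
Proof.
  intros Hal Hz. split; [|split].
  - apply (solves_ext _ _ _ (fun v => v ^ 0 * F12 (zeta/4) (1/2) (3/4) (v ^ 4 / (16 * alpha)))).
    intros v. unfold f1. simpl. ring.
    apply solves_f; try lia; try lra; intros x; simpl; lra.
  - apply (solves_ext _ _ _ (fun v => v ^ 1 * F12 ((zeta+1)/4) (3/4) (5/4) (v ^ 4 / (16 * alpha)))).
    intros v. unfold f2. simpl. ring.
    apply solves_f; try lia; try lra; intros x; simpl; lra.
  - apply (solves_ext _ _ _ (fun v => v ^ 2 * F12 ((zeta+2)/4) (5/4) (3/2) (v ^ 4 / (16 * alpha)))).
    intros v. unfold f3. simpl. ring.
    apply solves_f; try lia; try lra; intros x; simpl; lra.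
Qed.

Lemma part_indep alpha zeta : 0 < alpha -> 0 < zeta ->
  lin_indep3 (f1 alpha zeta) (f2 alpha zeta) (f3 alpha zeta).
Proof.
  intros Hal Hz c1 c2 c3 H.
  assert (Hz0 : 0 <= 0 ^ 4 / (16 * alpha)) by (simpl; unfold Rdiv; rewrite !Rmult_0_l; lra).
  assert (Hz1 : 0 <= 1 ^ 4 / (16 * alpha)) by (simpl; unfold Rdiv; apply Rmult_le_pos; [lra| apply Rlt_le, Rinv_0_lt_compat; lra]).
  assert (A := F12_ge1 (zeta/4) (1/2) (3/4) _ ltac:(lra) ltac:(lra) ltac:(lra) Hz0).
  assert (B := F12_ge1 ((zeta+1)/4) (3/4) (5/4) _ ltac:(lra) ltac:(lra) ltac:(lra) Hz1).
  assert (C := F12_ge1 ((zeta+2)/4) (5/4) (3/2) _ ltac:(lra) ltac:(lra) ltac:(lra) Hz1).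
  assert (H0 := H 0). assert (Hp := H 1). assert (Hm := H (-1)).
  unfold f1, f2, f3 in H0, Hp, Hm.
  replace ((-1) ^ 4) with (1 ^ 4) in Hm by ring.
  set (F1 := F12 (zeta / 4) (1 / 2) (3 / 4) (0 ^ 4 / (16 * alpha))) in *.
  set (F2 := F12 ((zeta + 1) / 4) (3 / 4) (5 / 4) (1 ^ 4 / (16 * alpha))) in *.
  set (F3 := F12 ((zeta + 2) / 4) (5 / 4) (3 / 2) (1 ^ 4 / (16 * alpha))) in *.
  assert (c1 = 0).
  { replace (c1 * F1 + c2 * (0 * _) + c3 * (0 ^ 2 * _)) with (c1 * F1) in H0 by (simpl; ring).
    apply Rmult_integral in H0. destruct H0; auto. lra. }
  subst c1.
  assert (c3 * F3 = 0) by (simpl in Hp, Hm; nra).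
  assert (c3 = 0) by (apply Rmult_integral in H1; destruct H1; auto; lra).
  subst c3. assert (c2 * F2 = 0) by (simpl in Hp; lra).
  apply Rmult_integral in H2. destruct H2; [|lra]. auto.
Qed.

Lemma exp_le a b : a <= b -> exp a <= exp b.
Proof. intros H. destruct (Rle_lt_or_eq_dec _ _ H). left; apply exp_increasing; auto. subst; lra. Qed.

Lemma deriv_h x t : derivable_pt_lim (fun t => 1 + x * (exp t - 1) - exp (x * t)) t
   (x * exp t - x * exp (x * t)).
Proof.
  assert (A : derivable_pt_lim (fun t => exp (x * t)) t (exp (x * t) * x)).
  { apply (derivable_pt_lim_comp (fun t => x * t) exp t x (exp (x*t))).
    - assert (H := derivable_pt_lim_scal id x t 1 (derivable_pt_lim_id t)).
      unfold mult_real_fct, id in H. rewrite Rmult_1_r in H. exact H.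
    - apply derivable_pt_lim_exp. }
  assert (B : derivable_pt_lim (fun t => 1 + x * (exp t - 1)) t (0 + x * (exp t - 0))).
  { apply (derivable_pt_lim_plus (fct_cte 1) (fun t => x * (exp t - 1))).
    apply derivable_pt_lim_const.
    apply (derivable_pt_lim_scal (fun t => exp t - 1) x t).
    apply (derivable_pt_lim_minus exp (fct_cte 1)). apply derivable_pt_lim_exp. apply derivable_pt_lim_const. }
  replace (x * exp t - x * exp (x * t)) with ((0 + x * (exp t - 0)) - exp (x * t) * x) by ring.
  apply (derivable_pt_lim_minus (fun t => 1 + x * (exp t - 1)) (fun t => exp (x * t))); auto.
Qed.

Lemma exp_bern x t : 0 <= x <= 1 -> exp (x * t) <= 1 + x * (exp t - 1).
Proof.
  intros Hx. set (h := fun t => 1 + x * (exp t - 1) - exp (x * t)).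
  assert (h0 : h 0 = 0) by (unfold h; rewrite Rmult_0_r, exp_0; ring).
  enough (0 <= h t) by (unfold h in *; lra).
  destruct (Rtotal_order t 0) as [Ht|[Ht|Ht]].
  - destruct (MVT_cor2 h (fun t => x * exp t - x * exp (x * t)) t 0 Ht) as [c [Hc1 Hc2]].
    intros; apply deriv_h.
    rewrite h0 in Hc1.
    assert (exp c <= exp (x * c)) by (apply exp_le; nra).
    assert (x * exp c - x * exp (x * c) <= 0) by nra. nra.
  - subst. lra.
  - destruct (MVT_cor2 h (fun t => x * exp t - x * exp (x * t)) 0 t Ht) as [c [Hc1 Hc2]].
    intros; apply deriv_h.
    rewrite h0 in Hc1.
    assert (exp (x * c) <= exp c) by (apply exp_le; nra).
    assert (0 <= x * exp c - x * exp (x * c)) by nra. nra.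
Qed.

Lemma bernoulli y x : 0 < y -> 0 <= x <= 1 -> Rpower y x <= 1 + x * (y - 1).
Proof.
  intros Hy Hx. unfold Rpower. rewrite <- (exp_ln y) at 2 by auto. apply exp_bern; auto.
Qed.

Lemma poch_shift x k : poch x (S k) = x * poch (x + 1) k.
Proof.
  induction k. simpl; ring.
  rewrite poch_S, IHk, poch_S, S_INR. ring.
Qed.

Lemma Rpower_pos y x : 0 < Rpower y x.
Proof. apply exp_pos. Qed.

Lemma gamma_ub_aux x m : 0 < x <= 1 ->
  Rpower (INR (S m)) x * INR (fact m) <= poch (1 + x) m.
Proof.
  intros Hx. induction m.
  - simpl. unfold Rpower. rewrite ln_1, Rmult_0_r, exp_0. lra.
  - rewrite poch_S. 
    assert (Hm : 0 < INR (S m)) by (apply lt_0_INR; lia).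
    assert (E : Rpower (INR (S (S m))) x = Rpower (INR (S m)) x * Rpower (INR (S (S m)) / INR (S m)) x).
    { rewrite Rpower_mult_distr; auto. f_equal. field. lra. apply Rdiv_lt_0_compat; auto. apply lt_0_INR; lia. }
    rewrite E. change (fact (S m)) with (S m * fact m)%nat. rewrite mult_INR.
    assert (B := bernoulli (INR (S (S m)) / INR (S m)) x ltac:(apply Rdiv_lt_0_compat; auto; apply lt_0_INR; lia) ltac:(lra)).
    replace (1 + x * (INR (S (S m)) / INR (S m) - 1)) with ((INR (S m) + x) / INR (S m)) in B
      by (rewrite (S_INR (S m)); field; lra).
    assert (P := Rpower_pos (INR (S m)) x). assert (F := fact_pos m).
    apply Rle_trans with (Rpower (INR (S m)) x * INR (fact m) * (INR (S m) + x)).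
    + replace (Rpower (INR (S m)) x * Rpower (INR (S (S m)) / INR (S m)) x * (INR (S m) * INR (fact m)))
       with ((Rpower (INR (S m)) x * INR (fact m) * INR (S m)) * Rpower (INR (S (S m)) / INR (S m)) x) by ring.
      replace (Rpower (INR (S m)) x * INR (fact m) * (INR (S m) + x)) with
        ((Rpower (INR (S m)) x * INR (fact m) * INR (S m)) * ((INR (S m) + x) / INR (S m))) by (field; lra).
      apply Rmult_le_compat_l; auto. apply Rmult_le_pos; [apply Rmult_le_pos|]; lra.
    + replace (1 + x + INR m) with (INR (S m) + x) by (rewrite S_INR; ring).
      apply Rmult_le_compat_r. lra. auto.
Qed.

Lemma cv_S_iff (u : nat -> R) l : Un_cv (fun n => u (S n)) l -> Un_cv u l.
Proof.
  intros H eps He. destruct (H eps He) as [N HN]. exists (S N). intros n Hn.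
  destruct n; [lia|]. apply HN. lia.
Qed.

Lemma cv_S (u : nat -> R) l : Un_cv u l -> Un_cv (fun n => u (S n)) l.
Proof.
  intros H eps He. destruct (H eps He) as [N HN]. exists N. intros n Hn. apply HN. lia.
Qed.

Lemma gseq_S x m : 0 < x ->
  gamma_seq x (S (S m)) = gamma_seq x (S m) * (INR (S (S m)) * Rpower (INR (S (S m))) x /
     (Rpower (INR (S m)) x * (x + INR (S (S m))))).
Proof.
  intros Hx. unfold gamma_seq. rewrite (poch_S x (S (S m))).
  change (fact (S (S m))) with (S (S m) * fact (S m))%nat. rewrite mult_INR.
  assert (P := poch_pos x (S (S m)) Hx). assert (F := fact_pos (S m)).
  assert (R1 := Rpower_pos (INR (S m)) x). assert (0 < INR (S (S m))) by (apply lt_0_INR; lia).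
  field. repeat split; lra.
Qed.

Lemma gseq_ub x m : 0 < x <= 1 -> gamma_seq x (S m) <= 1 / x.
Proof.
  intros Hx. unfold gamma_seq. rewrite poch_shift, poch_S.
  change (fact (S m)) with (S m * fact m)%nat. rewrite mult_INR.
  assert (B := gamma_ub_aux x m Hx).
  assert (P := poch_pos (x+1) m ltac:(lra)). replace (1 + x) with (x + 1) in B by ring.
  assert (HS : 0 < INR (S m)) by (apply lt_0_INR; lia). rewrite S_INR in *.
  assert (Hm := pos_INR m).
  apply Rle_trans with (INR (S m) * poch (x + 1) m / (x * (poch (x + 1) m * (x + 1 + INR m)))).
  - rewrite S_INR. unfold Rdiv. apply Rmult_le_compat_r.
    apply Rlt_le, Rinv_0_lt_compat. apply Rmult_lt_0_compat; [lra|]. apply Rmult_lt_0_compat; lra.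
    replace ((INR m + 1) * INR (fact m) * Rpower (INR m + 1) x) with ((INR m + 1) * (Rpower (INR m + 1) x * INR (fact m))) by ring.
    apply Rmult_le_compat_l; lra.
  - rewrite S_INR. 
    replace ((INR m + 1) * poch (x + 1) m / (x * (poch (x + 1) m * (x + 1 + INR m)))) with
     ((INR m + 1) / (x + 1 + INR m) * (1 / x)) by (field; lra).
    assert ((INR m + 1) / (x + 1 + INR m) <= 1).
    { apply (Rmult_le_reg_r (x + 1 + INR m)). lra. unfold Rdiv. rewrite Rmult_assoc, Rinv_l by lra. lra. }
    assert (0 < 1 / x) by (apply Rdiv_lt_0_compat; lra). nra.
Qed.

Lemma gseq_incr x m : 0 < x <= 1 -> gamma_seq x (S m) <= gamma_seq x (S (S m)).
Proof.
  intros Hx. rewrite gseq_S by lra.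
  assert (G : 0 < gamma_seq x (S m)).
  { unfold gamma_seq. apply Rdiv_lt_0_compat. apply Rmult_lt_0_compat. apply fact_pos. apply Rpower_pos.
    apply poch_pos; lra. }
  set (a := INR (S m)). set (b := INR (S (S m))).
  assert (Ha : 0 < a) by (apply lt_0_INR; lia). assert (Hb : b = a + 1) by (unfold a, b; rewrite (S_INR (S m)); auto).
  assert (E : Rpower a x = Rpower b x * Rpower (a / b) x).
  { rewrite Rpower_mult_distr. f_equal. field. lra. lra. apply Rdiv_lt_0_compat; lra. }
  assert (B := bernoulli (a / b) x ltac:(apply Rdiv_lt_0_compat; lra) ltac:(lra)).
  replace (1 + x * (a / b - 1)) with ((b - x) / b) in B by (rewrite Hb; field; lra).
  assert (P1 := Rpower_pos a x). assert (P2 := Rpower_pos b x).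
  enough (1 <= b * Rpower b x / (Rpower a x * (x + b))) by nra.
  apply (Rmult_le_reg_r (Rpower a x * (x + b))). apply Rmult_lt_0_compat; lra.
  unfold Rdiv. rewrite Rmult_assoc, Rinv_l by (apply Rgt_not_eq, Rmult_lt_0_compat; lra).
  rewrite Rmult_1_l, Rmult_1_r. rewrite E.
  assert (Rpower b x * Rpower (a / b) x * (x + b) <= Rpower b x * ((b - x) / b) * (x + b)).
  { apply Rmult_le_compat_r. lra. apply Rmult_le_compat_l; lra. }
  assert (Rpower b x * ((b - x) / b) * (x + b) = Rpower b x * (b - x * x / b)) by (field; lra).
  assert (0 <= x * x / b) by (apply Rmult_le_pos; [nra| apply Rlt_le, Rinv_0_lt_compat; lra]).
  nra.
Qed.

Lemma gamma_cv_01 x : 0 < x <= 1 -> exists l, Un_cv (gamma_seq x) l /\ 0 < l.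
Proof.
  intros Hx.
  assert (Gr : Un_growing (fun n => gamma_seq x (S n))) by (intros n; apply gseq_incr; auto).
  destruct (growing_cv (fun n => gamma_seq x (S n)) Gr) as [l Hl].
  { exists (1 / x). intros y [n ->]. apply gseq_ub; auto. }
  exists l. split. apply cv_S_iff; auto.
  assert (H0 := growing_ineq _ _ Gr Hl 0%nat). simpl in H0.
  assert (0 < gamma_seq x 1).
  { unfold gamma_seq. apply Rdiv_lt_0_compat. apply Rmult_lt_0_compat. apply fact_pos. apply Rpower_pos.
    apply poch_pos; lra. }
  lra.
Qed.

Lemma cv_frac x : 0 < x -> Un_cv (fun m => x * INR (S m) / (x + INR (S m) + 1)) x.
Proof.
  intros Hx eps He.
  destruct (archimed_cor1 (eps / (x * (x + 1))) ltac:(apply Rdiv_lt_0_compat; nra)) as [N [HN HN0]].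
  exists N. intros n Hn. unfold Rdist.
  assert (HNr : 0 < INR N) by (apply lt_0_INR; lia).
  assert (Hle : INR N <= INR (S n)) by (apply le_INR; lia).
  replace (x * INR (S n) / (x + INR (S n) + 1) - x) with (- (x * (x + 1) / (x + INR (S n) + 1)))
    by (field; pose proof (pos_INR (S n)); lra).
  rewrite Rabs_Ropp, Rabs_pos_eq.
  2:{ apply Rmult_le_pos. nra. apply Rlt_le, Rinv_0_lt_compat. pose proof (pos_INR (S n)); lra. }
  apply Rle_lt_trans with (x * (x + 1) / INR N).
  - unfold Rdiv. apply Rmult_le_compat_l. nra. apply Rinv_le_contravar; auto. lra.
  - apply (Rmult_lt_reg_r (/ (x * (x + 1)))). apply Rinv_0_lt_compat; nra.
    replace (x * (x + 1) / INR N * / (x * (x + 1))) with (/ INR N) by (field; split; lra).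
    exact HN.
Qed.

Lemma gamma_seq_succ x l : 0 < x -> Un_cv (gamma_seq x) l -> Un_cv (gamma_seq (x + 1)) (x * l).
Proof.
  intros Hx H. apply cv_S_iff.
  apply (Un_cv_ext (fun m => gamma_seq x (S m) * (x * INR (S m) / (x + INR (S m) + 1)))).
  - intros m. unfold gamma_seq. rewrite Rpower_plus, Rpower_1 by (apply lt_0_INR; lia).
    rewrite (poch_shift x (S m)), poch_S.
    replace (x + 1 + 1) with (x + 2) by ring.
    assert (P := poch_pos (x+1) (S m) ltac:(lra)). rewrite poch_S in P.
    assert (P0 := poch_pos (x+1) m ltac:(lra)).
    assert (F := fact_pos (S m)). assert (R1 := Rpower_pos (INR (S m)) x).
    assert (0 < INR (S m)) by (apply lt_0_INR; lia).
    rewrite (poch_S (x+1) (S m)), (poch_S (x+1) m). rewrite S_INR in *.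
    replace (x + 1 + 1) with (x + 2) in * by ring.
    field. repeat split; try lra. 
  - replace (x * l) with (l * x) by ring. apply CV_mult. apply cv_S; auto. apply cv_frac; auto.
Qed.

Lemma gamma_ex_m m : forall x, 0 < x <= INR m + 1 -> exists l, Un_cv (gamma_seq x) l /\ 0 < l.
Proof.
  induction m; intros x Hx.
  - apply gamma_cv_01. simpl in Hx; lra.
  - destruct (Rle_dec x 1). apply gamma_cv_01; lra.
    destruct (IHm (x - 1)) as [l [Hl Hp]]. rewrite S_INR in Hx; lra.
    exists ((x - 1) * l). split. replace x with (x - 1 + 1) at 1 by ring. apply gamma_seq_succ; auto. lra.
    apply Rmult_lt_0_compat; lra.
Qed.

Lemma gamma_ex x : 0 < x -> exists l, Un_cv (gamma_seq x) l /\ 0 < l.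
Proof.
  intros Hx. destruct (archimed_cor1 (/ x) ltac:(apply Rinv_0_lt_compat; lra)) as [N [HN HN0]].
  apply (gamma_ex_m N). split; auto.
  assert (0 < INR N) by (apply lt_0_INR; lia).
  assert (x < INR N).
  { destruct (Rlt_le_dec x (INR N)); auto.
    assert (/ x <= / INR N) by (apply Rinv_le_contravar; lra). lra. }
  lra.
Qed.

Lemma Gamma_spec x : 0 < x -> Un_cv (gamma_seq x) (Gamma x) /\ 0 < Gamma x.
Proof.
  intros Hx. destruct (gamma_ex x Hx) as [l [Hl Hp]].
  assert (H : Un_cv (gamma_seq x) (Gamma x)).
  { unfold Gamma. apply epsilon_spec. exists l; auto. }
  split; auto. rewrite (UL_sequence _ _ _ H Hl). auto.
Qed.

Lemma Gamma_pos x : 0 < x -> 0 < Gamma x.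
Proof. intros; apply Gamma_spec; auto. Qed.

Lemma Gamma_succ x : 0 < x -> Gamma (x + 1) = x * Gamma x.
Proof.
  intros Hx. apply (UL_sequence (gamma_seq (x + 1))). apply Gamma_spec; lra.
  apply gamma_seq_succ; auto. apply Gamma_spec; auto.
Qed.

Lemma Gamma_poch x k : 0 < x -> Gamma (x + INR k) = Gamma x * poch x k.
Proof.
  intros Hx. induction k.
  - simpl. rewrite Rplus_0_r. ring.
  - rewrite S_INR, poch_S. replace (x + (INR k + 1)) with ((x + INR k) + 1) by ring.
    rewrite Gamma_succ by (pose proof (pos_INR k); lra). rewrite IHk. ring.
Qed.

Lemma poch1_fact k : poch 1 k = INR (fact k).
Proof.
  induction k. reflexivity. rewrite poch_S, IHk. change (fact (S k)) with (S k * fact k)%nat.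
  rewrite mult_INR, S_INR. ring.
Qed.

Lemma Gamma_1 : Gamma 1 = 1.
Proof.
  apply (UL_sequence (gamma_seq 1)). apply Gamma_spec; lra.
  apply cv_S_iff. apply (Un_cv_ext (fun m => INR (S m) / INR (S (S m)))).
  - intros m. unfold gamma_seq. rewrite Rpower_1 by (apply lt_0_INR; lia). rewrite poch1_fact.
    change (fact (S (S m))) with (S (S m) * fact (S m))%nat. rewrite mult_INR.
    assert (F := fact_pos (S m)). assert (0 < INR (S (S m))) by (apply lt_0_INR; lia).
    field. lra.
  - intros eps He. destruct (archimed_cor1 eps He) as [N [HN HN0]]. exists N. intros n Hn.
    unfold Rdist. rewrite (S_INR (S n)). assert (HS := pos_INR (S n)).
    replace (INR (S n) / (INR (S n) + 1) - 1) with (- (/ (INR (S n) + 1))) by (field; lra).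
    rewrite Rabs_Ropp, Rabs_pos_eq by (apply Rlt_le, Rinv_0_lt_compat; lra).
    apply Rle_lt_trans with (/ INR N); auto. apply Rinv_le_contravar. apply lt_0_INR; lia.
    assert (INR N <= INR (S n)) by (apply le_INR; lia). lra.
Qed.

Lemma Gamma_fact k : Gamma (1 + INR k) = INR (fact k).
Proof. rewrite Gamma_poch, Gamma_1, poch1_fact by lra. ring. Qed.

Lemma dlim_ext f g x l l' : (forall y, f y = g y) -> l = l' -> derivable_pt_lim g x l' -> derivable_pt_lim f x l.
Proof.
  intros H E D. replace f with g. subst; auto. apply functional_extensionality; intros; auto.
Qed.

Fixpoint Fw (n : nat) (x : R) : R :=
  match n with
  | O => x
  | S O => 1 - cos x
  | S (S m as n1) => - (sin x ^ n1 * cos x) / INR (S n1) + INR n1 / INR (S n1) * Fw m x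
  end.

Lemma d_sinpow k x : derivable_pt_lim (fun y => sin y ^ S k) x (INR (S k) * sin x ^ k * cos x).
Proof.
  assert (H := derivable_pt_lim_comp sin (fun y => y ^ S k) x _ _ (derivable_pt_lim_sin x)
    (derivable_pt_lim_pow (sin x) (S k))).
  unfold comp in H. simpl pred in H. exact H.
Qed.

Lemma d_Fw n x : derivable_pt_lim (Fw n) x (sin x ^ n).
Proof.
  revert x. 
  enough (forall n, (forall x, derivable_pt_lim (Fw n) x (sin x ^ n)) /\
                    (forall x, derivable_pt_lim (Fw (S n)) x (sin x ^ S n))) by (apply H).
  induction n0 as [|m [IH1 IH2]].
  - split; intros x.
    + simpl. apply derivable_pt_lim_id.
    + apply (dlim_ext _ (fun y => fct_cte 1 y - cos y) x _ (0 - - sin x)).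
      intros; reflexivity. simpl; ring.
      apply (derivable_pt_lim_minus (fct_cte 1) cos). apply derivable_pt_lim_const. apply derivable_pt_lim_cos.
  - split; auto. intros x.
    set (c := INR (S (S m))).
    assert (Hc : 0 < c) by (apply lt_0_INR; lia).
    assert (D1 := derivable_pt_lim_mult (fun y => sin y ^ S m) cos x _ _ (d_sinpow m x) (derivable_pt_lim_cos x)).
    assert (D2 := derivable_pt_lim_scal _ (- / c) x _ D1).
    assert (D3 := derivable_pt_lim_scal _ (INR (S m) / c) x _ (IH1 x)).
    assert (D4 := derivable_pt_lim_plus _ _ x _ _ D2 D3).
    eapply dlim_ext; [ | | exact D4].
    { intros y. unfold plus_fct, mult_real_fct, mult_fct. cbn [Fw]. fold c. unfold Rdiv. ring. }
    assert (E := sin2_cos2 x). unfold Rsqr in E.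
    assert (E' : cos x * cos x = 1 - sin x * sin x) by lra.
    unfold c. rewrite (S_INR (S m)). rewrite S_INR. simpl pow.
    replace ((INR m + 1) * sin x ^ m * cos x * cos x) with ((INR m + 1) * sin x ^ m * (1 - sin x * sin x))
      by (rewrite <- E'; ring).
    field.
    pose proof (pos_INR m). lra.
Qed.

Lemma Fw_at0 n : Fw n 0 = 0.
Proof.
  enough (forall n, Fw n 0 = 0 /\ Fw (S n) 0 = 0) by apply H.
  induction n0 as [|m [H1 H2]]. split; simpl. auto. rewrite cos_0; ring.
  split; auto. cbn [Fw]. rewrite H1, sin_0. simpl. unfold Rdiv. ring.
Qed.

Definition Iw n := Fw n (PI / 2).

Lemma Iw_SS m : Iw (S (S m)) = INR (S m) / INR (S (S m)) * Iw m.
Proof. unfold Iw. cbn [Fw]. rewrite cos_PI2. unfold Rdiv. ring. Qed.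

Lemma Iw_0 : Iw 0 = PI / 2. Proof. reflexivity. Qed.
Lemma Iw_1 : Iw 1 = 1. Proof. unfold Iw. simpl. rewrite cos_PI2. ring. Qed.

Lemma Iw_pos n : 0 < Iw n.
Proof.
  enough (forall n, 0 < Iw n /\ 0 < Iw (S n)) by apply H.
  induction n0 as [|m [H1 H2]]. rewrite Iw_0, Iw_1. split; [apply PI2_RGT_0|lra].
  split; auto. rewrite Iw_SS. apply Rmult_lt_0_compat; auto. apply Rdiv_lt_0_compat; apply lt_0_INR; lia.
Qed.

Lemma Iw_mono n : Iw (S n) <= Iw n.
Proof.
  set (G := fun y => Fw n y - Fw (S n) y).
  destruct (MVT_cor2 G (fun y => sin y ^ n - sin y ^ S n) 0 (PI/2) PI2_RGT_0) as [c [Hc1 Hc2]].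
  { intros c _. apply (derivable_pt_lim_minus (Fw n) (Fw (S n))); apply d_Fw. }
  unfold G in Hc1. rewrite !Fw_at0 in Hc1.
  assert (S1 : 0 <= sin c) by (apply sin_ge_0; pose proof PI_RGT_0; lra).
  assert (S2 := SIN_bound c).
  assert (0 <= sin c ^ n - sin c ^ S n).
  { simpl. assert (0 <= sin c ^ n) by (apply pow_le; auto). nra. }
  unfold Iw. assert (0 <= (sin c ^ n - sin c ^ S n) * (PI / 2 - 0)).
  { apply Rmult_le_pos; auto. pose proof PI2_RGT_0; lra. }
  lra.
Qed.

Definition Ww n := poch (1/2) n / INR (fact n).

Lemma Ww_pos n : 0 < Ww n.
Proof. unfold Ww. apply Rdiv_lt_0_compat. apply poch_pos; lra. apply fact_pos. Qed.

Lemma Ww_S n : Ww (S n) = Ww n * (2 * INR n + 1) / (2 * INR n + 2).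
Proof.
  unfold Ww. rewrite poch_S. change (fact (S n)) with (S n * fact n)%nat. rewrite mult_INR, S_INR.
  assert (F := fact_pos n). assert (H := pos_INR n). field. lra.
Qed.

Lemma Iw_even_odd n : Iw (2 * n) = PI / 2 * Ww n /\ Iw (2 * n + 1) = / ((2 * INR n + 1) * Ww n).
Proof.
  induction n as [|n [H1 H2]].
  - change (2 * 0)%nat with 0%nat. change (0 + 1)%nat with 1%nat. rewrite Iw_1, Iw_0.
    unfold Ww. simpl. split; field.
  - replace (2 * S n + 1)%nat with (S (S (2 * n + 1))) by lia.
    replace (2 * S n)%nat with (S (S (2 * n))) by lia.
    rewrite !Iw_SS, H1, H2, Ww_S.
    assert (W := Ww_pos n). assert (Hn := pos_INR n).
    rewrite !S_INR, !plus_INR, !mult_INR. simpl (INR 2). simpl (INR 1).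
    split; field; lra.
Qed.

Lemma W_bounds n : (1 <= n)%nat ->
  PI * INR n / (INR n + 1) <= 4 * INR n / (Ww n ^ 2 * (2 * INR n + 1) ^ 2) <= PI.
Proof.
  intros Hn.
  destruct (Iw_even_odd n) as [E0 E1].
  destruct (Iw_even_odd (S n)) as [E2 _].
  assert (M1 := Iw_mono (2 * n)). replace (S (2 * n)) with (2 * n + 1)%nat in M1 by lia.
  assert (M2 := Iw_mono (2 * n + 1)). replace (S (2 * n + 1)) with (2 * S n)%nat in M2 by lia.
  rewrite E0, E1 in M1. rewrite E1, E2, Ww_S in M2.
  assert (W := Ww_pos n). assert (Hn0 : 1 <= INR n) by (apply (le_INR 1); lia).
  assert (HP := PI_RGT_0).
  set (w := Ww n) in *. set (m := INR n) in *.
  assert (A : 2 <= PI * w * w * (2 * m + 1)).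
  { assert (Hd : 0 < (2 * m + 1) * w) by nra.
    apply (Rmult_le_compat_l ((2 * m + 1) * w)) in M1; [|lra].
    rewrite Rinv_r in M1 by lra. nra. }
  assert (B : PI * w * w * (2 * m + 1) * (2 * m + 1) <= 2 * (2 * m + 2)).
  { assert (Hd : 0 < (2 * m + 1) * w) by nra.
    apply (Rmult_le_compat_l ((2 * m + 1) * w)) in M2; [|lra].
    rewrite Rinv_r in M2 by lra.
    replace ((2 * m + 1) * w * (PI / 2 * (w * (2 * m + 1) / (2 * m + 2)))) with
      (PI * w * w * (2 * m + 1) * (2 * m + 1) / (2 * (2 * m + 2))) in M2 by (field; lra).
    apply (Rmult_le_compat_r (2 * (2 * m + 2))) in M2; [|lra].
    unfold Rdiv in M2. rewrite Rmult_assoc, Rinv_l, Rmult_1_r in M2 by lra. lra. }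
  assert (Q : 0 < w ^ 2 * (2 * m + 1) ^ 2) by (simpl; nra).
  split.
  - apply (Rmult_le_reg_r ((m + 1) * (w ^ 2 * (2 * m + 1) ^ 2))). nra.
    replace (PI * m / (m + 1) * ((m + 1) * (w ^ 2 * (2 * m + 1) ^ 2))) with
      (m * (PI * w * w * (2 * m + 1) * (2 * m + 1))) by (field; lra).
    replace (4 * m / (w ^ 2 * (2 * m + 1) ^ 2) * ((m + 1) * (w ^ 2 * (2 * m + 1) ^ 2))) with
      (4 * m * (m + 1)) by (field; lra).
    nra.
  - apply (Rmult_le_reg_r (w ^ 2 * (2 * m + 1) ^ 2)). auto.
    replace (4 * m / (w ^ 2 * (2 * m + 1) ^ 2) * (w ^ 2 * (2 * m + 1) ^ 2)) with (4 * m) by (field; lra).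
    nra.
Qed.

Lemma sqrt_close g Q m : 0 <= g -> g * g = Q -> 0 < m -> PI * m / (m + 1) <= Q <= PI ->
  Rabs (g - sqrt PI) <= sqrt PI / (m + 1).
Proof.
  intros Hg HQ Hm [B1 B2].
  assert (HP := PI_RGT_0). set (s := sqrt PI).
  assert (Hs : 0 < s) by (apply sqrt_lt_R0; auto).
  assert (Hss : s * s = PI) by (apply sqrt_sqrt; lra).
  assert (g <= s) by nra.
  rewrite Rabs_left1 by lra.
  assert (PI - Q <= PI / (m + 1)).
  { assert (PI * m / (m + 1) = PI - PI / (m + 1)) by (field; lra). lra. }
  assert ((s - g) * s <= (s - g) * (s + g)) by (apply Rmult_le_compat_l; lra).
  assert ((s - g) * (s + g) = PI - Q) by (rewrite <- Hss, <- HQ; ring).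
  assert ((s - g) * s <= PI / (m + 1)) by lra.
  apply (Rmult_le_reg_r s); auto.
  replace (s / (m + 1) * s) with (PI / (m + 1)) by (rewrite <- Hss; field; lra). lra.
Qed.

Lemma Gamma_half : Gamma (1 / 2) = sqrt PI.
Proof.
  apply (UL_sequence (gamma_seq (1/2))). apply Gamma_spec; lra.
  intros eps He.
  assert (HP := PI_RGT_0). assert (Hs : 0 < sqrt PI) by (apply sqrt_lt_R0; auto).
  destruct (archimed_cor1 (eps / sqrt PI) ltac:(apply Rdiv_lt_0_compat; lra)) as [N [HN HN0]].
  exists N. intros n Hn. unfold Rdist.
  assert (Hn1 : (1 <= n)%nat) by lia.
  set (g := gamma_seq (1/2) n).
  assert (Hm : 0 < INR n) by (apply lt_0_INR; lia).
  assert (W := Ww_pos n). assert (F := fact_pos n).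
  assert (Eg : g = 2 * sqrt (INR n) / (Ww n * (2 * INR n + 1))).
  { unfold g, gamma_seq. replace (1/2) with (/2) by field. rewrite Rpower_sqrt by auto.
    rewrite poch_S. unfold Ww. replace (/2) with (1/2) by field.
    assert (0 < poch (1/2) n) by (apply poch_pos; lra). field. repeat split; lra. }
  assert (Hg : 0 <= g).
  { rewrite Eg. apply Rmult_le_pos. apply Rmult_le_pos. lra. apply sqrt_pos.
    apply Rlt_le, Rinv_0_lt_compat. nra. }
  assert (HQ : g * g = 4 * INR n / (Ww n ^ 2 * (2 * INR n + 1) ^ 2)).
  { rewrite Eg. assert (Sq := sqrt_sqrt (INR n) ltac:(lra)).
    replace (2 * sqrt (INR n) / (Ww n * (2 * INR n + 1)) * (2 * sqrt (INR n) / (Ww n * (2 * INR n + 1))))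
      with (4 * (sqrt (INR n) * sqrt (INR n)) / (Ww n ^ 2 * (2 * INR n + 1) ^ 2)) by (field; lra).
    rewrite Sq. auto. }
  assert (C := sqrt_close g _ (INR n) Hg HQ Hm (W_bounds n Hn1)).
  apply Rle_lt_trans with (sqrt PI / (INR n + 1)); auto.
  assert (INR N <= INR n) by (apply le_INR; lia).
  assert (0 < INR N) by (apply lt_0_INR; lia).
  apply Rle_lt_trans with (sqrt PI * / INR N).
  - unfold Rdiv. apply Rmult_le_compat_l. lra. apply Rinv_le_contravar; lra.
  - apply (Rmult_lt_reg_r (/ sqrt PI)). apply Rinv_0_lt_compat; auto.
    replace (sqrt PI * / INR N * / sqrt PI) with (/ INR N) by (field; lra). exact HN.
Qed.

Lemma Gamma_at x y k : 0 < x -> y = x + INR k -> Gamma y = Gamma x * poch x k.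
Proof. intros Hx ->. apply Gamma_poch; auto. Qed.

Lemma fact_even k : INR (fact (2 * k)) = 4 ^ k * INR (fact k) * poch (1/2) k.
Proof.
  induction k. simpl; ring.
  replace (2 * S k)%nat with (S (S (2 * k))) by lia.
  change (fact (S (S (2 * k)))) with (S (S (2 * k)) * (S (2 * k) * fact (2 * k)))%nat.
  change (fact (S k)) with (S k * fact k)%nat.
  rewrite !mult_INR, IHk, poch_S. rewrite !S_INR, mult_INR. simpl (INR 2). simpl pow. field.
Qed.

Lemma fact_odd k : INR (fact (2 * k + 1)) = 4 ^ k * INR (fact k) * poch (3/2) k.
Proof.
  induction k. simpl; ring.
  replace (2 * S k + 1)%nat with (S (S (2 * k + 1))) by lia.
  change (fact (S (S (2 * k + 1)))) with (S (S (2 * k + 1)) * (S (2 * k + 1) * fact (2 * k + 1)))%nat.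
  change (fact (S k)) with (S k * fact k)%nat.
  rewrite !mult_INR, IHk, poch_S. rewrite !S_INR, plus_INR, mult_INR. simpl (INR 2). simpl (INR 1). simpl pow. field.
Qed.

Lemma poch32_even k : poch (3/2) (2 * k) = 4 ^ k * poch (3/4) k * poch (5/4) k.
Proof.
  induction k. simpl; ring.
  replace (2 * S k)%nat with (S (S (2 * k))) by lia.
  rewrite !poch_S, IHk. rewrite S_INR, mult_INR. simpl (INR 2). simpl pow. field.
Qed.

Lemma Gamma_54 : Gamma (5/4) = Gamma (1/4) / 4.
Proof. replace (5/4) with (1/4 + 1) by field. rewrite Gamma_succ by lra. field. Qed.

Lemma Gamma_32 : Gamma (3/2) = sqrt PI / 2.
Proof. replace (3/2) with (1/2 + 1) by field. rewrite Gamma_succ, Gamma_half by lra. field. Qed.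

Lemma pow_div4 X k : (X / 4) ^ k = X ^ k / 4 ^ k.
Proof. unfold Rdiv. rewrite Rpow_mult_distr, pow_inv. auto. Qed.

Section Om0.
Variables alpha zeta v : R.
Hypothesis Hal : 0 < alpha.
Hypothesis Hz : 0 < zeta.

Let X := v ^ 4 / (4 * alpha).
Let z := v ^ 4 / (16 * alpha).

Lemma z_eq : z = X / 4.
Proof. unfold z, X. field. lra. Qed.

Lemma x0_sq : (- v ^ 2 / (2 * sqrt alpha)) ^ 2 = X.
Proof.
  unfold X. assert (S := sqrt_sqrt alpha ltac:(lra)). assert (0 < sqrt alpha) by (apply sqrt_lt_R0; auto).
  replace ((- v ^ 2 / (2 * sqrt alpha)) ^ 2) with (v ^ 4 / (4 * (sqrt alpha * sqrt alpha))) by (field; lra).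
  rewrite S. auto.
Qed.

Lemma Om0_even k : Omega0_term alpha zeta v (2 * k) = F12_term (zeta/4) (1/2) (3/4) z k.
Proof.
  unfold Omega0_term. rewrite F12_term_eq. unfold cF.
  rewrite (Gamma_at (zeta/4) (INR (2 * k) / 2 + zeta / 4) k) by (try lra; rewrite mult_INR; simpl; field).
  rewrite (Gamma_at (3/4) (INR (2 * k) / 2 + 3 / 4) k) by (try lra; rewrite mult_INR; simpl; field).
  rewrite fact_even. rewrite pow_mult, x0_sq, z_eq, pow_div4.
  assert (G1 := Gamma_pos (zeta/4) ltac:(lra)). assert (G2 := Gamma_pos (3/4) ltac:(lra)).
  assert (P1 := poch_pos (1/2) k ltac:(lra)). assert (P2 := poch_pos (3/4) k ltac:(lra)).
  assert (F := fact_pos k). assert (Q := pow_lt 4 k ltac:(lra)).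
  field. repeat split; lra.
Qed.

Definition K0 := - (2 * Gamma (3 / 4) * Gamma ((zeta + 2) / 4) / (sqrt alpha * Gamma (1 / 4) * Gamma (zeta / 4))).

Lemma Om0_odd k : Omega0_term alpha zeta v (2 * k + 1) =
   K0 * (v ^ 2 * F12_term ((zeta+2)/4) (5/4) (3/2) z k).
Proof.
  unfold Omega0_term, K0. rewrite F12_term_eq. unfold cF.
  rewrite (Gamma_at ((zeta+2)/4) (INR (2 * k + 1) / 2 + zeta / 4) k) by (try lra; rewrite plus_INR, mult_INR; simpl; field).
  rewrite (Gamma_at (5/4) (INR (2 * k + 1) / 2 + 3 / 4) k) by (try lra; rewrite plus_INR, mult_INR; simpl; field).
  rewrite Gamma_54, fact_odd. rewrite pow_add, pow_mult, x0_sq, z_eq, pow_div4.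
  assert (G1 := Gamma_pos (zeta/4) ltac:(lra)). assert (G2 := Gamma_pos (3/4) ltac:(lra)).
  assert (G3 := Gamma_pos ((zeta+2)/4) ltac:(lra)). assert (G4 := Gamma_pos (1/4) ltac:(lra)).
  assert (P1 := poch_pos (3/2) k ltac:(lra)). assert (P2 := poch_pos (5/4) k ltac:(lra)).
  assert (P3 := poch_pos ((zeta+2)/4) k ltac:(lra)).
  assert (F := fact_pos k). assert (Q := pow_lt 4 k ltac:(lra)).
  assert (0 < sqrt alpha) by (apply sqrt_lt_R0; auto).
  simpl pow. field. repeat split; lra.
Qed.

Lemma part_Om0 : infinite_sum (Omega0_term alpha zeta v)
       (f1 alpha zeta v
        - 2 * Gamma (3 / 4) * Gamma ((zeta + 2) / 4)
            / (sqrt alpha * Gamma (1 / 4) * Gamma (zeta / 4)) * f3 alpha zeta v).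
Proof.
  replace (f1 alpha zeta v - 2 * Gamma (3 / 4) * Gamma ((zeta + 2) / 4)
            / (sqrt alpha * Gamma (1 / 4) * Gamma (zeta / 4)) * f3 alpha zeta v)
    with (f1 alpha zeta v + K0 * (v ^ 2 * F12 ((zeta+2)/4) (5/4) (3/2) z))
    by (unfold K0, f3, z; ring).
  apply (isum_interleave _ _ _ _ _ Om0_even Om0_odd).
  - unfold f1. apply F12_sum; lra.
  - apply isum_scal. apply isum_scal. apply F12_sum; lra.
Qed.
End Om0.

Lemma s_fun_4 l : s_fun (l + 4) = s_fun l.
Proof.
  unfold s_fun. rewrite plus_INR. replace (INR 4) with 4 by (simpl; ring).
  replace ((INR l + 4) * PI / 4) with (INR l * PI / 4 + PI) by field.
  rewrite neg_cos, neg_sin. ring.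
Qed.

Lemma s_fun_4k k j : s_fun (4 * k + j) = s_fun j.
Proof.
  induction k. f_equal. 
  replace (4 * S k + j)%nat with ((4 * k + j) + 4)%nat by lia. rewrite s_fun_4. auto.
Qed.

Lemma sqrt2_pos : 0 < sqrt 2.
Proof. apply sqrt_lt_R0; lra. Qed.

Lemma sqrt2_sq : sqrt 2 * sqrt 2 = 2.
Proof. apply sqrt_sqrt; lra. Qed.

Lemma s_fun_0 : s_fun 0 = / sqrt 2.
Proof. unfold s_fun. simpl. replace (0 * PI / 4) with 0 by field. rewrite cos_0, sin_0. ring. Qed.

Lemma s_fun_1 : s_fun 1 = / sqrt 2.
Proof.
  unfold s_fun. simpl. replace (1 * PI / 4) with (PI / 4) by field. rewrite cos_PI4, sin_PI4.
  assert (H := sqrt2_pos). assert (H2 := sqrt2_sq).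
  replace (/ sqrt 2 * (1 / sqrt 2 + 1 / sqrt 2) * (1 / sqrt 2)) with (2 / (sqrt 2 * sqrt 2) * / sqrt 2) by (field; lra). rewrite H2. field. lra.
Qed.

Lemma s_fun_2 : s_fun 2 = 0.
Proof.
  unfold s_fun. replace (INR 2 * PI / 4) with (PI / 2) by (simpl; field). rewrite cos_PI2. ring.
Qed.

Lemma s_fun_3 : s_fun 3 = 0.
Proof.
  unfold s_fun. replace (INR 3 * PI / 4) with (PI / 4 + PI / 2) by (simpl; field).
  rewrite cos_plus, sin_plus, cos_PI2, sin_PI2, cos_PI4, sin_PI4. ring.
Qed.

Lemma q_eq alpha : 0 < alpha -> Rpower (4 * alpha) (1 / 4) = sqrt 2 * Rpower alpha (1 / 4).
Proof.
  intros Hal. rewrite <- Rpower_mult_distr by lra. f_equal.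
  replace (Rpower 4 (1/4)) with (Rpower (2 * 2) (1/4)) by (f_equal; ring). rewrite <- Rpower_mult_distr by lra. rewrite <- Rpower_plus.
  replace (1/4 + 1/4) with (/2) by field. apply Rpower_sqrt. lra.
Qed.

Lemma q_pow4 alpha : 0 < alpha -> Rpower (4 * alpha) (1 / 4) ^ 4 = 4 * alpha.
Proof.
  intros Hal. rewrite <- Rpower_pow by apply Rpower_pos. rewrite Rpower_mult.
  replace (1 / 4 * INR 4) with 1 by (simpl; field). apply Rpower_1. lra.
Qed.

Lemma sqrt_PI2 : sqrt (PI / 2) = sqrt PI / 2 * sqrt 2.
Proof.
  assert (HP := PI_RGT_0). apply sqrt_lem_1. lra.
  apply Rmult_le_pos. apply Rmult_le_pos. apply sqrt_pos. lra. apply sqrt_pos.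
  replace (sqrt PI / 2 * sqrt 2 * (sqrt PI / 2 * sqrt 2)) with ((sqrt PI * sqrt PI) * (sqrt 2 * sqrt 2) / 4) by field.
  rewrite sqrt2_sq, sqrt_sqrt by lra. field.
Qed.

Lemma sqrt_2PI : sqrt (2 * PI) = 2 * sqrt PI / sqrt 2.
Proof.
  assert (HP := PI_RGT_0). assert (H := sqrt2_pos). apply sqrt_lem_1. lra.
  apply Rmult_le_pos. apply Rmult_le_pos. lra. apply sqrt_pos. apply Rlt_le, Rinv_0_lt_compat; auto.
  replace (2 * sqrt PI / sqrt 2 * (2 * sqrt PI / sqrt 2)) with (4 * (sqrt PI * sqrt PI) / (sqrt 2 * sqrt 2)) by (field; lra).
  rewrite sqrt2_sq, sqrt_sqrt by lra. field.
Qed.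

Section Om1.
Variables alpha zeta v : R.
Hypothesis Hal : 0 < alpha.
Hypothesis Hz : 0 < zeta.

Let X := v ^ 4 / (4 * alpha).
Let z := v ^ 4 / (16 * alpha).
Let q := Rpower (4 * alpha) (1 / 4).

Lemma z_eq1 : z = X / 4.
Proof. unfold z, X. field. lra. Qed.

Lemma x1_4 : (- v / q) ^ 4 = X.
Proof.
  unfold X. assert (Q := q_pow4 alpha Hal). fold q in Q. assert (Hq : 0 < q) by apply Rpower_pos.
  replace ((- v / q) ^ 4) with (v ^ 4 / q ^ 4) by (field; lra). rewrite Q. auto.
Qed.

Lemma Om1_0 k : Omega1_term alpha zeta v (4 * k + 0) = v * F12_term ((zeta+1)/4) (3/4) (5/4) z k.
Proof.
  unfold Omega1_term. rewrite s_fun_4k, s_fun_0. fold q. rewrite F12_term_eq. unfold cF.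
  rewrite (Gamma_at ((zeta+1)/4) ((INR (4 * k + 0) + 1 + zeta) / 4) k) by (try lra; rewrite plus_INR, mult_INR; simpl; field).
  rewrite (Gamma_at 1 (INR (4 * k + 0) / 4 + 1) k) by (try lra; rewrite plus_INR, mult_INR; simpl; field).
  rewrite (Gamma_at (3/2) ((INR (4 * k + 0) + 3) / 2) (2 * k)) by (try lra; rewrite plus_INR, !mult_INR; simpl; field).
  rewrite Gamma_1, poch1_fact, Gamma_32, poch32_even, sqrt_PI2.
  rewrite Nat.add_0_r, pow_mult, x1_4, z_eq1, pow_div4.
  assert (G1 := Gamma_pos ((zeta+1)/4) ltac:(lra)).
  assert (P1 := poch_pos (3/4) k ltac:(lra)). assert (P2 := poch_pos (5/4) k ltac:(lra)).
  assert (F := fact_pos k). assert (Q := pow_lt 4 k ltac:(lra)).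
  assert (HP := PI_RGT_0). assert (0 < sqrt PI) by (apply sqrt_lt_R0; auto). assert (S2 := sqrt2_pos).
  field. repeat split; lra.
Qed.

Definition K1 := - (sqrt (2 * PI) * Gamma ((zeta + 2) / 4)
            / (Rpower alpha (1 / 4) * Gamma (1 / 4) * Gamma ((zeta + 1) / 4))).

Lemma Om1_1 k : Omega1_term alpha zeta v (4 * k + 1) = K1 * (v ^ 2 * F12_term ((zeta+2)/4) (5/4) (3/2) z k).
Proof.
  unfold Omega1_term, K1. rewrite s_fun_4k, s_fun_1. fold q. rewrite F12_term_eq. unfold cF.
  rewrite (Gamma_at ((zeta+2)/4) ((INR (4 * k + 1) + 1 + zeta) / 4) k) by (try lra; rewrite plus_INR, mult_INR; simpl; field).
  rewrite (Gamma_at (5/4) (INR (4 * k + 1) / 4 + 1) k) by (try lra; rewrite plus_INR, mult_INR; simpl; field).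
  rewrite (Gamma_at 1 ((INR (4 * k + 1) + 3) / 2) (2 * k + 1)) by (try lra; rewrite !plus_INR, !mult_INR; simpl; field).
  rewrite Gamma_1, poch1_fact, Gamma_54, fact_odd, sqrt_PI2, sqrt_2PI.
  rewrite pow_add, pow_mult, x1_4, z_eq1, pow_div4.
  unfold q. rewrite q_eq by auto.
  assert (G1 := Gamma_pos ((zeta+1)/4) ltac:(lra)). assert (G2 := Gamma_pos ((zeta+2)/4) ltac:(lra)).
  assert (G3 := Gamma_pos (1/4) ltac:(lra)).
  assert (P1 := poch_pos (3/2) k ltac:(lra)). assert (P2 := poch_pos (5/4) k ltac:(lra)).
  assert (P3 := poch_pos ((zeta+2)/4) k ltac:(lra)).
  assert (F := fact_pos k). assert (Q := pow_lt 4 k ltac:(lra)).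
  assert (HP := PI_RGT_0). assert (0 < sqrt PI) by (apply sqrt_lt_R0; auto). assert (S2 := sqrt2_pos).
  assert (A := Rpower_pos alpha (1/4)).
  simpl pow. field. repeat split; lra.
Qed.

Lemma Om1_23 k j : (j = 2 \/ j = 3)%nat -> Omega1_term alpha zeta v (4 * k + j) = 0.
Proof.
  intros Hj. unfold Omega1_term. rewrite s_fun_4k.
  destruct Hj as [->| ->]; [rewrite s_fun_2|rewrite s_fun_3]; unfold Rdiv; ring.
Qed.

Lemma part_Om1 : infinite_sum (Omega1_term alpha zeta v)
       (f2 alpha zeta v
        - sqrt (2 * PI) * Gamma ((zeta + 2) / 4)
            / (Rpower alpha (1 / 4) * Gamma (1 / 4) * Gamma ((zeta + 1) / 4))
            * f3 alpha zeta v).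
Proof.
  set (u := fun i k => match i with
     | O => v * F12_term ((zeta+1)/4) (3/4) (5/4) z k
     | 1%nat => K1 * (v ^ 2 * F12_term ((zeta+2)/4) (5/4) (3/2) z k)
     | _ => 0 end).
  set (A := fun i => match i with
     | O => v * F12 ((zeta+1)/4) (3/4) (5/4) z
     | 1%nat => K1 * (v ^ 2 * F12 ((zeta+2)/4) (5/4) (3/2) z)
     | _ => 0 end).
  replace (f2 alpha zeta v - _ * f3 alpha zeta v) with ((A 0%nat + A 2%nat) + (A 1%nat + A 3%nat))
    by (unfold A, K1, f2, f3, z; ring).
  apply (isum_int4 _ u A).
  - intros k i Hi. destruct i as [|[|[|[|i]]]]; simpl u.
    + apply Om1_0. + apply Om1_1. + apply Om1_23; auto. + apply Om1_23; auto. + lia.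
  - intros i Hi. destruct i as [|[|[|[|i]]]]; simpl u; simpl A.
    + apply isum_scal. apply F12_sum; lra.
    + apply isum_scal. apply isum_scal. apply F12_sum; lra.
    + apply isum_0. + apply isum_0. + lia.
Qed.
End Om1.

Theorem mainTheorem3 (alpha zeta : R) (halpha : 0 < alpha) (hzeta : 0 < zeta) :
  solves_ODE alpha zeta (f1 alpha zeta) /\
  solves_ODE alpha zeta (f2 alpha zeta) /\
  solves_ODE alpha zeta (f3 alpha zeta) /\
  lin_indep3 (f1 alpha zeta) (f2 alpha zeta) (f3 alpha zeta) /\
  (forall v : R,
     infinite_sum (Omega0_term alpha zeta v)
       (f1 alpha zeta v
        - 2 * Gamma (3 / 4) * Gamma ((zeta + 2) / 4)
            / (sqrt alpha * Gamma (1 / 4) * Gamma (zeta / 4)) * f3 alpha zeta v)) /\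
  (forall v : R,
     infinite_sum (Omega1_term alpha zeta v)
       (f2 alpha zeta v
        - sqrt (2 * PI) * Gamma ((zeta + 2) / 4)
            / (Rpower alpha (1 / 4) * Gamma (1 / 4) * Gamma ((zeta + 1) / 4))
            * f3 alpha zeta v)).
Proof.
  destruct (part_ODE alpha zeta halpha hzeta) as [A [B C]].
  split; [exact A|]. split; [exact B|]. split; [exact C|].
  split; [apply part_indep; auto|].
  split; intros v.
  - apply part_Om0; auto.
  - apply part_Om1; auto.
Qed.
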